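(* Let $A=\begin{bmatrix} a_1 & b_1 & 0\\ b_1 & a_2 & b_2\\ 0 & b_2 & a_3\end{bmatrix}$ be a positive semidefinite matrix with nonnegative entries $a_1,a_2,a_3,b_1,b_2\geq 0$. Then $A$ is infinitely divisible if and only if $b_1b_2=0$.
   Context: For a nonnegative matrix $A=[a_{ij}]$ and $r>0$, $A^{\circ r}=[a_{ij}^r]$. A nonnegative symmetric matrix $A$ is infinitely divisible if $A^{\circ r}$ is positive semidefinite for every $r>0$. *)

(* Defs.v *)
From mathcomp Require Import all_boot all_order all_algebra.
From mathcomp Require Import all_classical all_reals all_analysis.
Set Implicit Arguments. Unset Strict Implicit. Unset Printing Implicit Defensive.
Import Order.TTheory GRing.Theory Num.Theory.
Local Open Scope ring_scope.

Definition psd (R : realType) (n : nat) (A : 'M[R]_n) : Prop :=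
  A^T = A /\ forall x : 'cV[R]_n, 0 <= (x^T *m A *m x) 0 0.

Definition nonneg_mx (R : realType) (n : nat) (A : 'M[R]_n) : Prop :=
  forall i j, 0 <= A i j.

Definition hpow (R : realType) (n : nat) (A : 'M[R]_n) (r : R) : 'M[R]_n :=
  map_mx (fun a => powR a r) A.

Definition infinitely_divisible (R : realType) (n : nat) (A : 'M[R]_n) : Prop :=
  [/\ nonneg_mx A, A^T = A & forall r : R, 0 < r -> psd (hpow A r)].

Definition tri3 (R : realType) (a1 a2 a3 b1 b2 : R) : 'M[R]_3 :=
  \matrix_(i < 3, j < 3)
    nth 0 (nth [::] [:: [:: a1; b1; 0]; [:: b1; a2; b2]; [:: 0; b2; a3]] i) j.

(* Main.v *)
Require Import Defs.
From mathcomp Require Import all_boot all_order all_algebra.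
From mathcomp Require Import all_classical all_reals all_analysis.
From mathcomp Require Import ring lra.
Set Implicit Arguments. Unset Strict Implicit. Unset Printing Implicit Defensive.
Import Order.TTheory GRing.Theory Num.Theory.
Local Open Scope ring_scope.

Section S.
Variable R : realType.

Lemma qf3 (a1 a2 a3 b1 b2 : R) (x : 'cV[R]_3) :
  (x^T *m tri3 a1 a2 a3 b1 b2 *m x) 0 0 =
  a1 * x 0 0 ^+ 2 + a2 * x 1 0 ^+ 2 + a3 * x 2%:R 0 ^+ 2
  + 2 * b1 * x 0 0 * x 1 0 + 2 * b2 * x 1 0 * x 2%:R 0.
Proof.
rewrite !mxE !big_ord_recl big_ord0 /=.
rewrite !mxE !big_ord_recl !big_ord0 /= !mxE /=.
have -> : (lift ord0 ord0 : 'I_3) = 1 by apply/val_inj.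
have -> : (lift ord0 (lift ord0 ord0) : 'I_3) = 2%:R by apply/val_inj.
have -> : (ord0 : 'I_3) = 0 by apply/val_inj.
ring.
Qed.

Definition v3 (s t u : R) : 'cV[R]_3 := \col_(i < 3) nth 0 [:: s; t; u] i.

Lemma qfv (a1 a2 a3 b1 b2 s t u : R) :
  ((v3 s t u)^T *m tri3 a1 a2 a3 b1 b2 *m v3 s t u) 0 0 =
  a1 * s ^+ 2 + a2 * t ^+ 2 + a3 * u ^+ 2 + 2 * b1 * s * t + 2 * b2 * t * u.
Proof. by rewrite qf3 !mxE. Qed.

Lemma tri3_tr (a1 a2 a3 b1 b2 : R) : (tri3 a1 a2 a3 b1 b2)^T = tri3 a1 a2 a3 b1 b2.
Proof.
apply/matrixP => i j; rewrite !mxE.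
by case: i => [[|[|[|i]]] Hi]; case: j => [[|[|[|j]]] Hj].
Qed.

Lemma tri3_nn (a1 a2 a3 b1 b2 : R) : 0 <= a1 -> 0 <= a2 -> 0 <= a3 -> 0 <= b1 -> 0 <= b2 ->
  nonneg_mx (tri3 a1 a2 a3 b1 b2).
Proof.
move=> *; move=> i j; rewrite !mxE.
by case: i => [[|[|[|i]]] Hi]; case: j => [[|[|[|j]]] Hj].
Qed.

Lemma hpow_tri3 (a1 a2 a3 b1 b2 r : R) : 0 < r ->
  hpow (tri3 a1 a2 a3 b1 b2) r =
  tri3 (powR a1 r) (powR a2 r) (powR a3 r) (powR b1 r) (powR b2 r).
Proof.
move=> r0; apply/matrixP => i j; rewrite !mxE.
by case: i => [[|[|[|i]]] Hi]; case: j => [[|[|[|j]]] Hj] //=; rewrite powR0 // gt_eqF.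
Qed.

Lemma quad2 (p q c s t : R) : 0 <= p -> 0 <= q -> c ^+ 2 <= p * q ->
  0 <= p * s ^+ 2 + 2 * c * s * t + q * t ^+ 2.
Proof.
move=> hp hq hc.
have [p0|pp] := eqVneq p 0.
  have c0 : c = 0 by move: hc; rewrite p0 mul0r => h; apply/eqP; rewrite -sqrf_eq0; apply/eqP/le_anti; rewrite h sqr_ge0.
  by rewrite p0 c0; nra.
have pp' : 0 < p by rewrite lt_def pp hp.
have : 0 <= p * (p * s ^+ 2 + 2 * c * s * t + q * t ^+ 2).
  have -> : p * (p * s ^+ 2 + 2 * c * s * t + q * t ^+ 2) = (p * s + c * t) ^+ 2 + (p * q - c ^+ 2) * t ^+ 2 by ring.
  apply: addr_ge0; first exact: sqr_ge0.
  by apply: mulr_ge0; [rewrite subr_ge0 | exact: sqr_ge0].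
by rewrite pmulr_rge0.
Qed.

Lemma quad_inv (p q c : R) : (forall s t, 0 <= p * s ^+ 2 + 2 * c * s * t + q * t ^+ 2) ->
  0 <= p -> c ^+ 2 <= p * q.
Proof.
move=> H hp.
have hq : 0 <= q by have := H 0 1; rewrite !expr2; lra.
have [p0|pp] := eqVneq p 0.
  have := H (- (q + 1)) c; rewrite p0 mul0r; nra.
have pp' : 0 < p by rewrite lt_def pp hp.
have := H c (- p); nra.
Qed.

Lemma psd_minors (a1 a2 a3 b1 b2 : R) : 0 <= a1 -> 0 <= a2 ->
  psd (tri3 a1 a2 a3 b1 b2) -> b1 ^+ 2 <= a1 * a2 /\ b2 ^+ 2 <= a2 * a3.
Proof.
move=> h1 h2 [_ H]; split.
  apply: quad_inv => // s t; have := H (v3 s t 0); rewrite qfv => h.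
  apply: (le_trans h); rewrite le_eqVlt; apply/orP; left; apply/eqP; ring.
apply: quad_inv => // s t; have := H (v3 0 s t); rewrite qfv => h.
by apply: (le_trans h); rewrite le_eqVlt; apply/orP; left; apply/eqP; ring.
Qed.

Lemma key (x y z r : R) : 0 < x -> 0 < y -> 0 < z -> 0 < r ->
  r * (ln x + ln y - 2 * ln z) <= 1 / 4 ->
  3 / 4 * (powR x r * powR y r) <= powR z r ^+ 2.
Proof.
move=> x0 y0 z0 r0 hr.
rewrite /powR !gt_eqF //.
set d := r * (ln x + ln y - 2 * ln z).
have -> : expR (r * ln z) ^+ 2 = expR (r * ln x) * expR (r * ln y) * expR (- d).
  by rewrite expr2 -!expRD; congr expR; rewrite /d; ring.
have := expR_ge1Dx (- d).
have := expR_gt0 (r * ln x); have := expR_gt0 (r * ln y).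
set E1 := expR (r * ln x); set E2 := expR (r * ln y); set F := expR (- d).
move=> h1 h2 h3.
have h12 : 0 < E1 * E2 by apply: mulr_gt0.
have hd : d <= 1 / 4 by []. have hF : 3 / 4 <= F by lra.
by rewrite [leRHS]mulrC; apply: ler_wpM2r => //; exact: ltW.
Qed.


Lemma pow_minor (p q c r : R) : 0 < r -> 0 <= p -> 0 <= q -> 0 <= c -> c ^+ 2 <= p * q ->
  powR c r ^+ 2 <= powR p r * powR q r.
Proof.
move=> r0 hp hq hc h.
rewrite expr2 -!powRM //; apply: (ge0_ler_powR (ltW r0)); rewrite ?nnegrE -?expr2 //.
  exact: sqr_ge0.
exact: mulr_ge0.
Qed.

Lemma ln_minor (x y z : R) : 0 < x -> 0 < y -> 0 < z -> z ^+ 2 <= x * y ->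
  0 <= ln x + ln y - 2 * ln z.
Proof.
move=> x0 y0 z0 h.
have : ln (z ^+ 2) <= ln (x * y).
  by rewrite ler_ln // posrE ?exprn_gt0 ?mulr_gt0.
rewrite lnXn // lnM ?posrE // => h'.
rewrite subr_ge0; rewrite mulr2n in h'; lra.
Qed.

End S.
Unset Implicit Arguments.

Theorem lemma2p5 (R : realType) (a1 a2 a3 b1 b2 : R) :
  0 <= a1 -> 0 <= a2 -> 0 <= a3 -> 0 <= b1 -> 0 <= b2 ->
  psd (tri3 a1 a2 a3 b1 b2) ->
  (infinitely_divisible (tri3 a1 a2 a3 b1 b2) <-> b1 * b2 = 0).
Proof.
move=> h1 h2 h3 hb1 hb2 hA; have [m1 m2] := psd_minors h1 h2 hA; split.
  case=> _ _ Hr; apply/eqP; rewrite mulf_eq0; apply/negPn/negP; rewrite negb_or => /andP[nb1 nb2].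
  have b1p : 0 < b1 by rewrite lt_def nb1 hb1.
  have b2p : 0 < b2 by rewrite lt_def nb2 hb2.
  have a1p : 0 < a1.
    rewrite lt_def h1 andbT; apply/negP => /eqP a0; move: m1; rewrite a0 mul0r; nra.
  have a2p : 0 < a2.
    rewrite lt_def h2 andbT; apply/negP => /eqP a0; move: m1; rewrite a0 mulr0; nra.
  have a3p : 0 < a3.
    rewrite lt_def h3 andbT; apply/negP => /eqP a0; move: m2; rewrite a0 mulr0; nra.
  have d1p := ln_minor a1p a2p b1p m1.
  have d2p := ln_minor a2p a3p b2p m2.
  set d1 := ln a1 + ln a2 - 2 * ln b1 in d1p.
  set d2 := ln a2 + ln a3 - 2 * ln b2 in d2p.
  set r := (4 * (1 + d1 + d2))^-1.
  have hpos : 0 < 4 * (1 + d1 + d2) by lra.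
  have rp : 0 < r by rewrite invr_gt0.
  have hr : r * (1 + d1 + d2) = 1 / 4.
    rewrite /r; field; lra.
  have rd1 : r * d1 <= 1 / 4 by nra.
  have rd2 : r * d2 <= 1 / 4 by nra.
  have k1 := key a1p a2p b1p rp rd1.
  have k2 := key a2p a3p b2p rp rd2.
  have := Hr r rp; rewrite hpow_tri3 // => -[_ H].
  set P1 := powR a1 r in k1 k2 H; set P2 := powR a2 r in k1 k2 H.
  set P3 := powR a3 r in k1 k2 H; set Q1 := powR b1 r in k1 k2 H.
  set Q2 := powR b2 r in k1 k2 H.
  have p1 : 0 < P1 by apply: powR_gt0.
  have p2 : 0 < P2 by apply: powR_gt0.
  have p3 : 0 < P3 by apply: powR_gt0.
  have := H (v3 (- (Q1 * P3)) (P1 * P3) (- (Q2 * P1))); rewrite qfv.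
  have -> : P1 * (- (Q1 * P3)) ^+ 2 + P2 * (P1 * P3) ^+ 2 + P3 * (- (Q2 * P1)) ^+ 2 +
    2 * Q1 * - (Q1 * P3) * (P1 * P3) + 2 * Q2 * (P1 * P3) * - (Q2 * P1) =
    (P1 * P3) * (P1 * P2 * P3 - Q1 ^+ 2 * P3 - Q2 ^+ 2 * P1) by ring.
  rewrite pmulr_rge0; last exact: mulr_gt0.
  have e1 : 3 / 4 * (P1 * P2) * P3 <= Q1 ^+ 2 * P3 by apply: ler_wpM2r => //; exact: ltW.
  have e2 : 3 / 4 * (P2 * P3) * P1 <= Q2 ^+ 2 * P1 by apply: ler_wpM2r => //; exact: ltW.
  have e3 : 0 < P1 * P2 * P3 by rewrite !mulr_gt0.
  apply/negP; rewrite -ltNge.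
  lra.
move=> hb; split; [exact: tri3_nn | exact: tri3_tr | move=> r r0].
rewrite hpow_tri3 //; split; first exact: tri3_tr.
move=> x; rewrite qf3.
have hP1 := mulr_ge0 (powR_ge0 a1 r) (sqr_ge0 (x 0 0)).
have [b0|b0] : b1 = 0 \/ b2 = 0 by move/eqP: hb; rewrite mulf_eq0 => /orP[/eqP|/eqP]; [left|right].
  rewrite b0 powR0 ?gt_eqF //.
  have := quad2 (x 1 0) (x 2%:R 0) (powR_ge0 a2 r) (powR_ge0 a3 r) (pow_minor r0 h2 h3 hb2 m2).
  lra.
rewrite b0 powR0 ?gt_eqF //.
have := quad2 (x 0 0) (x 1 0) (powR_ge0 a1 r) (powR_ge0 a2 r) (pow_minor r0 h1 h2 hb1 m1).
have := mulr_ge0 (powR_ge0 a3 r) (sqr_ge0 (x 2%:R 0)).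
lra.
Qed.
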